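(* There is a deterministic distributed dynamic data structure for robust $2$-hop neighborhood listing which handles edge insertions and deletions in $O(1)$ amortized rounds.
   Context: Highly dynamic network model: a synchronous network on a fixed set $V$ of $n$ nodes with unique identifiers starts as the empty graph; at the beginning of round $i$ the graph is $G_i=(V,E_i)$, obtained from the previous graph by an adversary inserting and/or deleting an arbitrary (unbounded) set of edges. At the start of each round every node is notified only of the insertions/deletions of edges incident to it; then each node may send a message of $O(\log n)$ bits to each of its current neighbors. A distributed dynamic data structure consists of a local part $DS_v$ at each node $v$; at the end of every round, $DS_v$ may be queried and must answer immediately, without any further communication, either correctly or with $\texttt{inconsistent}$. The amortized round complexity is at most $c$ if for every round $i$, the number of rounds up to round $i$ in which at least one node $v$ has $DS_v$ in an inconsistent state, divided by the total number of topology changes that occurred up to round $i$, is at most $c$. For an edge $e$, its insertion time $t_e$ is the latest round in which $e$ was inserted (initially $-1$). An edge $e=\{u,w\}$ of $G_i$ is $(v,i)$-robust if $v\in e$, or $\{v,u\}\in E_i$ and $t_e\geq t_{\{v,u\}}$, or $\{v,w\}\in E_i$ and $t_e\geq t_{\{v,w\}}$. Robust $2$-hop neighborhood listing: at the end of round $i$, $DS_v$ must respond to a query $\{u,w\}$ with $\texttt{true}$ if the edge is $(v,i)$-robust, $\texttt{false}$ if it is not, or $\texttt{inconsistent}$. *)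

(* Defs.v *)
From mathcomp Require Import all_boot.
Set Implicit Arguments. Unset Strict Implicit. Unset Printing Implicit Defensive.

Section Model.
Variable n : nat.
(* Nodes are 'I_n (identifiers = indices). A dynamic graph is a sequence of
   simple graphs, G i being the graph of round i (i >= 1); G 0 is the
   initial empty graph. *)
Definition dyn_graph (G : nat -> rel 'I_n) : Prop :=
  [/\ (forall u w, G 0 u w = false),
      (forall i u w, G i u w = G i w u) &
      (forall i u, G i u u = false)].

Definition inserted_at (G : nat -> rel 'I_n) (j : nat) (x y : 'I_n) : bool :=
  (0 < j) && G j x y && ~~ G j.-1 x y.

(* insertion time of {x,y} as seen at round i: latest round j <= i in which it
   was inserted (0 if never, playing the role of -1; edges of G i with G 0
   empty always have insertion time >= 1). *)
Definition ins_time (G : nat -> rel 'I_n) (i : nat) (x y : 'I_n) : nat :=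
  \max_(j < i.+1 | inserted_at G j x y) j.

Definition robust (G : nat -> rel 'I_n) (i : nat) (v u w : 'I_n) : bool :=
  G i u w &&
  [|| (v == u) || (v == w),
      G i v u && (ins_time G i v u <= ins_time G i u w) |
      G i v w && (ins_time G i v w <= ins_time G i u w)].

Definition changes (G : nat -> rel 'I_n) (i : nat) : nat :=
  \sum_(1 <= j < i.+1)
     #|[set p : 'I_n * 'I_n | (p.1 < p.2) && (G j p.1 p.2 != G j.-1 p.1 p.2)]|.
End Model.

(* A deterministic distributed dynamic data structure on n nodes, with
   messages of at most about c * log2 (n+1) bits (elements of 'I_((n+1)^c),
   plus the possibility of sending nothing). Local state and local
   computation are unrestricted. In each round a node v:
   1. gets notified of the inserted and deleted incident edges (as the sets
      of neighbours u such that {v,u} was inserted / deleted),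
   2. sends (optionally) one message to each current neighbour,
   3. updates its state from the messages received (indexed by sender).
   At the end of the round DS_v is queried via [query]; None = inconsistent. *)
Record DSAlg (n c : nat) := {
  st : Type;
  init : 'I_n -> st;
  notify : 'I_n -> st -> {set 'I_n} -> {set 'I_n} -> st;
  send : 'I_n -> st -> 'I_n -> option 'I_((n.+1) ^ c);
  recv : 'I_n -> st -> ('I_n -> option 'I_((n.+1) ^ c)) -> st;
  query : 'I_n -> st -> 'I_n -> 'I_n -> option bool
}.

Section Exec.
Variables (n c : nat) (A : DSAlg n c) (G : nat -> rel 'I_n).

Fixpoint run (i : nat) : 'I_n -> @st _ _ A :=
  match i with
  | 0 => @init _ _ A
  | i'.+1 =>
    let prev := run i' in
    let s1 := fun x => @notify _ _ A x (prev x)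
                 [set u | G i'.+1 x u && ~~ G i' x u]
                 [set u | G i' x u && ~~ G i'.+1 x u] in
    fun v => @recv _ _ A v (s1 v)
               (fun u => if G i'.+1 u v then @send _ _ A u (s1 u) v else None)
  end.

Definition inconsistent_round (i : nat) : bool :=
  [exists v, exists u, exists w, (u != w) && (@query _ _ A v (run i v) u w == None)].

Definition inconsistent_rounds (i : nat) : nat :=
  \sum_(1 <= j < i.+1) inconsistent_round j.

Definition answers_correct : Prop :=
  forall i, 0 < i -> forall v u w : 'I_n, u != w ->
    forall b, @query _ _ A v (run i v) u w = Some b -> b = robust G i v u w.
End Exec.

(* Main.v *)
Require Import Defs.
From mathcomp Require Import all_boot.
From mathcomp Require Import zify.
Set Implicit Arguments. Unset Strict Implicit. Unset Printing Implicit Defensive.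

Section Alg.
Variable n : nat.
Definition K := (n.+1)^2.
Record S := mkS { r : nat; pnb : {set 'I_n}; nb : {set 'I_n}; tm : 'I_n -> nat;
  bout : 'I_n -> {set 'I_n}; msg : 'I_n -> option 'I_K;
  bin : 'I_n -> {set 'I_n}; fl : 'I_n -> bool }.

Lemma enc_proof (w : 'I_n) (e : bool) : w + e * n < K.
Proof. rewrite /K. have := ltn_ord w. case: e => /=; nia. Qed.
Definition enc w e : 'I_K := Ordinal (enc_proof w e).
Definition dec (k : 'I_K) : option ('I_n * bool) :=
  let m := val k in let e := n <= m in
  match insub (if e then m - n else m) with Some w => Some (w, e) | None => None end.
Lemma decK w e : dec (enc w e) = Some (w, e).
Proof.
rewrite /dec /=; case: e => /=.
  by rewrite mul1n leq_addl addnK valK.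
by rewrite mul0n addn0 leqNgt ltn_ord valK.
Qed.

Definition tog (B : {set 'I_n}) w := if w \in B then B :\ w else w |: B.
Definition pk (b t : {set 'I_n}) := [pick w | (w \in b) != (w \in t)].
Definition step b t := if pk b t is Some w then tog b w else b.
Definition msgf b t := if pk b t is Some w then Some (enc w (tog b w == t)) else None.

Definition pre (s : S) (ins del : {set 'I_n}) :=
  mkS (r s).+1 (nb s) ((nb s :|: ins) :\: del)
      (fun w => if w \in ins then (r s).+1 else tm s w) (bout s) (msg s) (bin s) (fl s).
Definition bo (s : S) v := if (v \in pnb s) && (v \in nb s) then bout s v else set0.
Definition bi (s : S) v := if (v \in pnb s) && (v \in nb s) then bin s v else set0.
Definition Tl (s : S) v := if v \in nb s then [set w in nb s | tm s v <= tm s w] else set0.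
Definition notify (x : 'I_n) s ins del :=
  let s' := pre s ins del in
  mkS (r s') (pnb s') (nb s') (tm s') (fun v => step (bo s' v) (Tl s' v))
      (fun v => msgf (bo s' v) (Tl s' v)) (bin s') (fl s').
Definition send (x : 'I_n) (s : S) v := msg s v.
Definition rb b (o : option 'I_K) :=
  match o with Some k => match dec k with Some (w, _) => tog b w | None => b end | None => b end.
Definition rf (o : option 'I_K) :=
  match o with Some k => match dec k with Some (_, e) => ~~ e | None => false end | None => false end.
Definition recv (v : 'I_n) (s : S) (m : 'I_n -> option 'I_K) :=
  mkS (r s) (pnb s) (nb s) (tm s) (bout s) (msg s) (fun u => rb (bi s u) (m u)) (fun u => rf (m u)).
Definition init (x : 'I_n) :=
  mkS 0 set0 set0 (fun _ => 0) (fun _ => set0) (fun _ => None) (fun _ => set0) (fun _ => false).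
Definition query (v : 'I_n) (s : S) (u w : 'I_n) : option bool :=
  if [exists x, fl s x] then None
  else Some (if v == u then w \in nb s else if v == w then u \in nb s
             else (w \in bin s u) || (u \in bin s w)).

Definition Alg : DSAlg n 2 := @Build_DSAlg n 2 S init notify send recv query.

Definition Dl (b t : {set 'I_n}) := [set w | (w \in b) != (w \in t)].

Lemma Dl0 b t : (Dl b t == set0) = (b == t).
Proof.
apply/eqP/eqP => [H|->].
  apply/setP => w; have : w \in Dl b t = (w \in (set0 : {set 'I_n})) by rewrite H.
  rewrite !inE.
  by case: (w \in b); case: (w \in t).
by apply/setP => w; rewrite !inE eqxx.
Qed.

Lemma rb_msgf b t : rb b (msgf b t) = step b t.
Proof. by rewrite /msgf /step; case: (pk b t) => [w|] //=; rewrite decK. Qed.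

Lemma rf_msgf b t : rf (msgf b t) = (step b t != t).
Proof.
rewrite /msgf /step /pk; case: pickP => [w Hw|H] /=; first by rewrite decK.
apply/esym/negbTE; rewrite negbK -Dl0; apply/eqP/setP => w; rewrite !inE.
by have := H w => /= ->.
Qed.

Lemma msgf0 : msgf set0 set0 = None.
Proof. by rewrite /msgf /pk; case: pickP => // w; rewrite !inE. Qed.

Lemma Dl_tog (b t : {set 'I_n}) w : (w \in b) != (w \in t) -> Dl (tog b w) t = Dl b t :\ w.
Proof.
move=> Hw; rewrite /tog; case: ifP => Hb; apply/setP => z; rewrite !inE;
  case: (z =P w) => [->|]; rewrite ?Hb ?eqxx //=; move: Hw; rewrite Hb;
  by case: (w \in t).
Qed.

Lemma step_dist b t : #|Dl (step b t) t| + (0 < #|Dl (step b t) t|) <= #|Dl b t|.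
Proof.
rewrite /step /pk; case: pickP => [w Hw | H].
  rewrite Dl_tog // [X in _ <= X](cardsD1 w) inE Hw /=.
  by case: (#|_|) => //= ?; rewrite addn1.
have -> : Dl b t = set0 by apply/setP => w; rewrite !inE; have := H w => /= ->.
by rewrite cards0.
Qed.

Lemma Dl_tri b t0 t : #|Dl b t| <= #|Dl b t0| + #|Dl t0 t|.
Proof.
apply: leq_trans (leq_card_setU _ _); apply: subset_leq_card.
apply/subsetP => w; rewrite !inE.
by case: (w \in b); case: (w \in t0); case: (w \in t).
Qed.

End Alg.

Section Math.
Variable n : nat.
Variable G : nat -> rel 'I_n.
Hypothesis HG : dyn_graph G.

Lemma G0 u w : G 0 u w = false. Proof. by case: HG. Qed.
Lemma Gsym i u w : G i u w = G i w u. Proof. by case: HG. Qed.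
Lemma Girr i u : G i u u = false. Proof. by case: HG. Qed.

Lemma ins_sym i x y : ins_time G i x y = ins_time G i y x.
Proof. by apply: eq_bigl => j; rewrite /inserted_at Gsym (Gsym j.-1). Qed.

Lemma ins_le i x y : ins_time G i x y <= i.
Proof. by apply/bigmax_leqP => j _; have := ltn_ord j; rewrite ltnS. Qed.

Lemma ins_timeS i x y :
  ins_time G i.+1 x y = if inserted_at G i.+1 x y then i.+1 else ins_time G i x y.
Proof.
rewrite /ins_time big_mkcond big_ord_recr /= -big_mkcond /=.
case: ifP => _; last by rewrite maxn0.
by apply/maxn_idPr; apply: leq_trans (ins_le i x y) _.
Qed.

Definition Tset i x v : {set 'I_n} :=
  if G i x v then [set w | G i x w && (ins_time G i x v <= ins_time G i x w)] else set0.

Fixpoint Bel i x v : {set 'I_n} :=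
  match i with
  | 0 => set0
  | j.+1 => step (if G j x v && G j.+1 x v then Bel j x v else set0) (Tset j.+1 x v)
  end.

Definition Inv i x :=
  let s := run (Alg n) G i x in
  [/\ r s = i, nb s = [set w | G i x w], (forall w, tm s w = ins_time G i x w),
      (forall v, bout s v = Bel i x v)
      & (forall u, bin s u = Bel i u x /\ fl s u = (Bel i u x != Tset i u x))].

Lemma Tset0 u x : Tset 0 u x = set0.
Proof. by rewrite /Tset G0. Qed.

Lemma ins0 x w : ins_time G 0 x w = 0.
Proof. by apply/eqP; rewrite -leqn0 ins_le. Qed.

Definition s1 i y := notify y (run (Alg n) G i y)
       [set u | G i.+1 y u && ~~ G i y u] [set u | G i y u && ~~ G i.+1 y u].

Lemma run_succ i x : run (Alg n) G i.+1 x =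
  recv x (s1 i x) (fun u => if G i.+1 u x then send u (s1 i u) x else None).
Proof. by []. Qed.

Lemma recv_bin v (s : S n) m u : bin (recv v s m) u = rb (bi s u) (m u).
Proof. by []. Qed.
Lemma recv_fl v (s : S n) m u : fl (recv v s m) u = rf (m u).
Proof. by []. Qed.

Lemma inv_all i x : Inv i x.
Proof.
elim: i x => [|i IH] x.
  split => //; first by apply/setP => w; rewrite !inE G0.
    by move=> w; rewrite ins0.
  by move=> u; rewrite Tset0 eqxx.
have pre_ok : forall y, let s' := pre (run (Alg n) G i y)
       [set u | G i.+1 y u && ~~ G i y u] [set u | G i y u && ~~ G i.+1 y u] in
    [/\ r s' = i.+1, pnb s' = [set w | G i y w], nb s' = [set w | G i.+1 y w],
     (forall w, tm s' w = ins_time G i.+1 y w) & (forall v, bout s' v = Bel i y v)].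
  move=> y /=; case: (IH y) => Hr Hnb Htm Hbo _; split => //.
  - by rewrite Hr.
  - apply/setP => w; rewrite Hnb !inE.
    by case: (G i y w); case: (G i.+1 y w).
  - move=> w; rewrite ins_timeS /inserted_at !inE Htm Hr.
    by case: (G i.+1 y w); case: (G i y w).
have bo_ok : forall y v, bo (pre (run (Alg n) G i y)
       [set u | G i.+1 y u && ~~ G i y u] [set u | G i y u && ~~ G i.+1 y u]) v
     = if G i y v && G i.+1 y v then Bel i y v else set0.
  move=> y v; case: (pre_ok y) => _ Hp Hn _ Hb.
  by rewrite /bo Hp Hn !inE Hb.
have Tl_ok : forall y v, Tl (pre (run (Alg n) G i y)
       [set u | G i.+1 y u && ~~ G i y u] [set u | G i y u && ~~ G i.+1 y u]) v
     = Tset i.+1 y v.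
  move=> y v; case: (pre_ok y) => _ _ Hn Ht _.
  rewrite /Tl /Tset Hn inE; case: ifP => // _.
  by apply/setP => w; rewrite !inE !Ht.
have msg_ok : forall u, (if G i.+1 u x then send u (s1 i u) x else None)
    = msgf (if G i u x && G i.+1 u x then Bel i u x else set0) (Tset i.+1 u x).
  move=> u; case: ifP => E.
    by rewrite /send /s1 /notify /= bo_ok Tl_ok E.
  by rewrite andbF /Tset E msgf0.
case: (pre_ok x) => Hr Hp Hn Ht _.
rewrite /Inv run_succ; split.
- by rewrite -Hr.
- by rewrite -Hn.
- by move=> w; rewrite -Ht.
- by move=> v; rewrite /= bo_ok Tl_ok.
move=> u; rewrite recv_bin recv_fl; cbv beta; rewrite msg_ok.
have -> : bi (s1 i x) u = (if G i u x && G i.+1 u x then Bel i u x else set0).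
  have Hp' : pnb (s1 i x) = [set w | G i x w] by exact: Hp.
  have Hn' : nb (s1 i x) = [set w | G i.+1 x w] by exact: Hn.
  have Hb' : bin (s1 i x) u = bin (run (Alg n) G i x) u by [].
  rewrite /bi Hp' Hn' Hb' !inE (Gsym i x u) (Gsym i.+1 x u).
  by case: (IH x) => _ _ _ _ /(_ u) [-> _].
by rewrite rb_msgf rf_msgf.
Qed.

Lemma correct : answers_correct (Alg n) G.
Proof.
move=> i _ v u w uw b.
case: (inv_all i v) => _ Hnb _ _ Hb.
rewrite /= /query; case: ifPn => // /existsPn Hfl [<-].
have HT : forall y, bin (run (Alg n) G i v) y = Tset i y v.
  move=> y; case: (Hb y) => -> Hf; apply/eqP.
  by have := Hfl y; rewrite Hf negbK.
rewrite /robust Hnb !HT /Tset.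
case: (v =P u) => [<-|vu]; first by rewrite inE andbT.
case: (v =P w) => [<-|vw]; first by rewrite inE Gsym andbT.
rewrite (Gsym i u v) (Gsym i w v).
case: (G i v u); case: (G i v w); rewrite ?inE ?in_set0 /= ?(Gsym i w u)
  ?(ins_sym i u v) ?(ins_sym i w v) ?(ins_sym i w u) ?andbF ?orbF //.
all: by case: (G i u w).
Qed.

Definition dd i x v := #|Dl (Bel i x v) (Tset i x v)|.
Definition D i := \max_(p : 'I_n * 'I_n) dd i p.1 p.2.
Definition kk j := #|[set p : 'I_n * 'I_n | (p.1 < p.2) && (G j p.1 p.2 != G j.-1 p.1 p.2)]|.

Lemma D0 : D 0 = 0.
Proof.
apply/eqP; rewrite -leqn0; apply/bigmax_leqP => p _.
rewrite /dd /= Tset0 leqn0 cards_eq0 Dl0 //.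
Qed.

Lemma Cx_card i x : #|[set w | G i.+1 x w != G i x w]| <= kk i.+1.
Proof.
pose f (w : 'I_n) : 'I_n * 'I_n := if x < w then (x, w) else (w, x).
have neqx : forall w, w \in [set w | G i.+1 x w != G i x w] -> w != x.
  move=> w; rewrite inE; apply: contra => /eqP ->; by rewrite !Girr.
rewrite -(card_in_imset (f := f)).
  apply: subset_leq_card; apply/subsetP => p /imsetP [w Hw ->].
  have := neqx w Hw; move: Hw; rewrite !inE /f /=.
  case: ifP => xw /= Hw nw; first by rewrite xw Hw.
  rewrite (Gsym i.+1 w x) (Gsym i w x) Hw andbT.
  have : val w != val x by [].
  by move: xw; rewrite neq_ltn => -> /=; rewrite orbF.
move=> w1 w2 H1 H2; have := neqx _ H1; have := neqx _ H2; rewrite /f.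
case: ifP => h1; case: ifP => h2 n2 n1 /eqP; rewrite xpair_eqE => /andP [/eqP e1 /eqP e2].
all: by subst; move: n1 n2; rewrite ?eqxx.
Qed.

Lemma T_stable i x v w : G i x v -> G i.+1 x v ->
  (w \in Tset i x v) != (w \in Tset i.+1 x v) -> G i.+1 x w != G i x w.
Proof.
move=> E1 E2; apply: contraNN => /eqP Ew.
rewrite /Tset E1 E2 !inE Ew ins_timeS /inserted_at E1 E2 /=.
case Hw: (G i x w) => //=.
by rewrite ins_timeS /inserted_at Ew Hw /=.
Qed.

Lemma T_new i x v w : ~~ G i x v -> w \in Tset i.+1 x v -> G i.+1 x w != G i x w.
Proof.
move=> E1; rewrite /Tset; case: ifP => E2; last by rewrite inE.
rewrite inE ins_timeS /inserted_at E2 (negbTE E1) /= => /andP [Hw].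
case Hw0: (G i x w); last by rewrite Hw.
rewrite ins_timeS /inserted_at Hw Hw0 /= => H.
by have := leq_trans H (ins_le i x w); rewrite ltnn.
Qed.

Lemma pair_bound i x v : dd i.+1 x v + (0 < dd i.+1 x v) <= D i + kk i.+1.
Proof.
rewrite /dd /=; apply: leq_trans (step_dist _ _) _.
case E: (G i x v && G i.+1 x v).
  case/andP: E => E1 E2.
  apply: leq_trans (Dl_tri _ (Tset i x v) _) _; apply: leq_add.
    have := @leq_bigmax _ (fun p : 'I_n * 'I_n => dd i p.1 p.2) (x, v). rewrite /D /dd /=. exact.
  apply: leq_trans (Cx_card i x); apply: subset_leq_card; apply/subsetP => w.
  rewrite !inE; exact: T_stable.
have -> : Dl set0 (Tset i.+1 x v) = Tset i.+1 x v.
  by apply/setP => w; rewrite /Dl !inE; case: (w \in _).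
apply: leq_trans (leq_addl (D i) _); apply: leq_trans (Cx_card i x).
apply: subset_leq_card; apply/subsetP => w Hw; rewrite inE.
case E2: (G i.+1 x v); last by move: Hw; rewrite /Tset E2 inE.
apply: T_new Hw; by move: E; rewrite E2 andbT => ->.
Qed.

Lemma D_step i : D i.+1 + (0 < D i.+1) <= D i + kk i.+1.
Proof.
case: (posnP (D i.+1)) => [->|pos] //.
have [p Hp] : exists p : 'I_n * 'I_n, 0 < dd i.+1 p.1 p.2.
  case: (pickP (fun p : 'I_n * 'I_n => 0 < dd i.+1 p.1 p.2)) => [p Hp|H].
    by exists p.
  have : D i.+1 <= 0.
    apply/bigmax_leqP => q _; have := H q; rewrite /= lt0n => /negbFE/eqP ->.
    by [].
  by rewrite leqn0 => /eqP E; rewrite E in pos.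
move: pos; rewrite /D (bigmax_eq_arg p) //; set q := (X in dd _ X.1 _) => pos.
by have := pair_bound i q.1 q.2; rewrite pos.
Qed.

Lemma inc_bound j : inconsistent_round (Alg n) G j -> 0 < D j.
Proof.
case/existsP => v /existsP [u /existsP [w /andP [_ /eqP Hq]]].
move: Hq; rewrite /= /query; case: ifPn => // /existsP [x Hx] _.
case: (inv_all j v) => _ _ _ _ /(_ x) [_ Hf]; rewrite Hf in Hx.
apply: leq_trans (@leq_bigmax _ (fun p : 'I_n * 'I_n => dd j p.1 p.2) (x, v)).
by rewrite /dd /= card_gt0 Dl0.
Qed.

Lemma amort i : inconsistent_rounds (Alg n) G i + D i <= changes G i.
Proof.
elim: i => [|i IH].
  by rewrite /inconsistent_rounds /changes !big_geq // D0.
have e1 : inconsistent_rounds (Alg n) G i.+1 =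
    inconsistent_rounds (Alg n) G i + inconsistent_round (Alg n) G i.+1.
  by rewrite /inconsistent_rounds big_nat_recr.
have e2 : changes G i.+1 = changes G i + kk i.+1.
  by rewrite /changes big_nat_recr.
rewrite e1 e2.
have h : (inconsistent_round (Alg n) G i.+1 : nat) <= (0 < D i.+1).
  by case E: inconsistent_round => //; rewrite (inc_bound E).
have := D_step i.
move: h IH; move: (nat_of_bool (inconsistent_round (Alg n) G i.+1)) => a.
move: (nat_of_bool (0 < D i.+1)) => b.
lia.
Qed.

End Math.

Theorem theorem9 :
  exists c C : nat, forall n : nat, exists A : DSAlg n c,
    forall G : nat -> rel 'I_n, dyn_graph G ->
      answers_correct A G /\
      forall i : nat, inconsistent_rounds A G i <= C * changes G i.
Proof.
exists 2, 1 => n; exists (Alg n) => G HG; split; first exact: correct.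
move=> i; rewrite mul1n; apply: leq_trans (amort HG i); exact: leq_addr.
Qed.
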